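(* Fix $p\in[0,\infty]$. Let $(R_t)_{t=0}^{T-1}$ be a dynamic monetary risk measure and $(U_t)_{t=0}^{T-1}$ a dynamic monetary utility function (both for this $p$), and let $\eta_t\in L^0(\mathcal{F}_t)$ with $\eta_t>0$ for each $t$. (i) For each $t\in\{0,\dots,T-1\}$, the map $$W_t(Y):=R_t(-Y)-\frac{1}{1+\eta_t}U_t\big(\big(R_t(-Y)-Y\big)_+\big)$$ is a mapping from $L^p(\mathcal{F}_{t+1})$ to $L^p(\mathcal{F}_t)$ with the properties: if $\lambda\in L^p(\mathcal{F}_t)$ and $Y\in L^p(\mathcal{F}_{t+1})$ then $W_t(Y+\lambda)=W_t(Y)+\lambda$; if $Y,\widetilde Y\in L^p(\mathcal{F}_{t+1})$ and $Y\le \widetilde Y$ then $W_t(Y)\le W_t(\widetilde Y)$; if $c\in L^p_+(\mathcal{F}_t)$ and $Y\in L^p(\mathcal{F}_{t+1})$ then $W_t(cY)=cW_t(Y)$. (ii) Let $(X_t)_{t=1}^T$ be an $\mathbb{F}$-adapted cash flow with $X_t\in L^p(\mathcal{F}_t)$ for every $t$, and define $V_T(X):=0$ and recursively, for $t=T-1,\dots,0$, with $Y_{t+1}:=X_{t+1}+V_{t+1}(X)$, $$V_t(X):=R_t(-Y_{t+1})-\frac{1}{1+\eta_t}U_t\big(\big(R_t(-Y_{t+1})-Y_{t+1}\big)_+\big).$$ Then for every $t\in\{0,\dots,T-1\}$, $$V_t(X)=W_t\circ\dots\circ W_{T-1}(X_{t+1}+\dots+X_T).$$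
   Context: Let $T\ge 1$ be an integer and $(\Omega,\mathcal{F},\mathbb{F},\mathbb{P})$ a filtered probability space with $\mathbb{F}=(\mathcal{F}_t)_{t=0}^T$ and $\{\emptyset,\Omega\}=\mathcal{F}_0\subseteq\dots\subseteq\mathcal{F}_T=\mathcal{F}$. $L^0(\mathcal{F}_t)$ is the space of real-valued $\mathcal{F}_t$-measurable random variables; for $p\in(0,\infty)$, $L^p(\mathcal{F}_t)=\{Y\in L^0(\mathcal{F}_t):\mathbb{E}|Y|^p<\infty\}$; $L^\infty(\mathcal{F}_t)$ is the space of essentially bounded $\mathcal{F}_t$-measurable random variables; $L^p_+(\mathcal{F}_t)$ denotes the nonnegative elements of $L^p(\mathcal{F}_t)$. Random variables equal a.s. are identified and all (in)equalities are understood $\mathbb{P}$-a.s. $x_+=\max(x,0)$. For $p\in[0,\infty]$, a dynamic monetary risk measure is a sequence of maps $R_t:L^p(\mathcal{F}_{t+1})\to L^p(\mathcal{F}_t)$, $t=0,\dots,T-1$, such that $R_t(Y+\lambda)=R_t(Y)-\lambda$ for $\lambda\in L^p(\mathcal{F}_t)$, $Y\in L^p(\mathcal{F}_{t+1})$; $Y\le\widetilde Y$ implies $R_t(Y)\ge R_t(\widetilde Y)$; and $R_t(cY)=cR_t(Y)$ for $c\in L^p_+(\mathcal{F}_t)$. A dynamic monetary utility function is a sequence of maps $U_t:L^p(\mathcal{F}_{t+1})\to L^p(\mathcal{F}_t)$, $t=0,\dots,T-1$, such that $U_t(Y+\lambda)=U_t(Y)+\lambda$ for $\lambda\in L^p(\mathcal{F}_t)$;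 $Y\le\widetilde Y$ implies $U_t(Y)\le U_t(\widetilde Y)$; and $U_t(cY)=cU_t(Y)$ for $c\in L^p_+(\mathcal{F}_t)$. *)

(* Defs.v *)
From mathcomp Require Import all_boot all_order all_algebra.
From mathcomp Require Import all_classical all_reals all_analysis.
Set Implicit Arguments. Unset Strict Implicit. Unset Printing Implicit Defensive.
Import Order.TTheory GRing.Theory Num.Theory.
Local Open Scope classical_set_scope.
Local Open Scope ring_scope.

Section Defs.
Context {R : realType} {d : measure_display} {Om : measurableType d}.

Definition Gmeas (G : set (set Om)) (f : Om -> R) : Prop :=
  forall B : set R, measurable B -> G (f @^-1` B).

Definition is_filtration (T : nat) (F : nat -> set (set Om)) : Prop :=
  [/\ (forall t, (t <= T)%N -> sigma_algebra setT (F t)),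
      (forall s t, (s <= t)%N -> (t <= T)%N -> F s `<=` F t),
      (forall A, F 0%N A <-> (A = set0 \/ A = setT)) &
      (forall A, F T A <-> measurable A)].

Definition inLp (P : probability Om R) (p : \bar R) (G : set (set Om))
    (Y : Om -> R) : Prop :=
  Gmeas G Y /\
  (if p is +oo%E then exists M : R, {ae P, forall x, `|Y x| <= M}
   else if p is r%:E then (r = 0) \/ (\int[P]_x ((`|Y x| `^ r)%:E) < +oo)%E
   else False).

Definition is_dyn_utility (P : probability Om R) (p : \bar R) (T : nat)
    (F : nat -> set (set Om)) (U : nat -> (Om -> R) -> (Om -> R)) : Prop :=
  forall t, (t < T)%N ->
  [/\ (forall Y, inLp P p (F t.+1) Y -> inLp P p (F t) (U t Y)),
      (forall (lam Y : Om -> R), inLp P p (F t) lam -> inLp P p (F t.+1) Y ->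
         {ae P, forall x, U t (Y \+ lam) x = U t Y x + lam x}),
      (forall (Y Y' : Om -> R), inLp P p (F t.+1) Y -> inLp P p (F t.+1) Y' ->
         {ae P, forall x, Y x <= Y' x} -> {ae P, forall x, U t Y x <= U t Y' x}) &
      (forall (c Y : Om -> R), inLp P p (F t) c -> {ae P, forall x, 0 <= c x} ->
         inLp P p (F t.+1) Y -> inLp P p (F t.+1) (c \* Y) ->
         {ae P, forall x, U t (c \* Y) x = c x * U t Y x})].

Definition is_dyn_risk (P : probability Om R) (p : \bar R) (T : nat)
    (F : nat -> set (set Om)) (Rm : nat -> (Om -> R) -> (Om -> R)) : Prop :=
  forall t, (t < T)%N ->
  [/\ (forall Y, inLp P p (F t.+1) Y -> inLp P p (F t) (Rm t Y)),
      (forall (lam Y : Om -> R), inLp P p (F t) lam -> inLp P p (F t.+1) Y ->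
         {ae P, forall x, Rm t (Y \+ lam) x = Rm t Y x - lam x}),
      (forall (Y Y' : Om -> R), inLp P p (F t.+1) Y -> inLp P p (F t.+1) Y' ->
         {ae P, forall x, Y x <= Y' x} -> {ae P, forall x, Rm t Y' x <= Rm t Y x}) &
      (forall (c Y : Om -> R), inLp P p (F t) c -> {ae P, forall x, 0 <= c x} ->
         inLp P p (F t.+1) Y -> inLp P p (F t.+1) (c \* Y) ->
         {ae P, forall x, Rm t (c \* Y) x = c x * Rm t Y x})].

Definition Wmap (Rm U : nat -> (Om -> R) -> (Om -> R)) (eta : nat -> Om -> R)
    (t : nat) (Y : Om -> R) : Om -> R :=
  fun x => Rm t (fun y => - Y y) x
    - (1 + eta t x)^-1 * U t (fun y => Num.max (Rm t (fun z => - Y z) y - Y y) 0) x.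

(* Vaux n = V_{T-n}(X): V_T = 0, V_t = formula with Y_{t+1} = X_{t+1} + V_{t+1} *)
Fixpoint Vaux (Rm U : nat -> (Om -> R) -> (Om -> R)) (eta : nat -> Om -> R)
    (T : nat) (X : nat -> Om -> R) (n : nat) : Om -> R :=
  match n with
  | 0%N => fun _ => 0
  | n'.+1 =>
      let t := (T - n'.+1)%N in
      let Y := fun x => X t.+1 x + Vaux Rm U eta T X n' x in
      fun x => Rm t (fun y => - Y y) x
        - (1 + eta t x)^-1 * U t (fun y => Num.max (Rm t (fun z => - Y z) y - Y y) 0) x
  end.

Definition V Rm U eta T X (t : nat) : Om -> R := Vaux Rm U eta T X (T - t).

Fixpoint Wchain (Rm U : nat -> (Om -> R) -> (Om -> R)) (eta : nat -> Om -> R)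
    (n t : nat) (Z : Om -> R) : Om -> R :=
  match n with
  | 0%N => Z
  | n'.+1 => Wmap Rm U eta t (Wchain Rm U eta n' t.+1 Z)
  end.

End Defs.

(* Main.v *)
Require Import Defs.
From mathcomp Require Import all_boot all_order all_algebra.
From mathcomp Require Import all_classical all_reals all_analysis.
From mathcomp Require Import measurable_realfun.
From mathcomp Require Import ring lra.
Import Order.TTheory GRing.Theory Num.Theory.
Local Open Scope classical_set_scope.
Local Open Scope ring_scope.

Section Inv.
Import numFieldNormedType.Exports.
Lemma measurable_inv (R : realType) : measurable_fun setT (@GRing.inv R).
Proof.
have -> : [set: R] = [set 0] `|` [set x | x != 0].
  by apply/seteqP; split => x //= _; case: (eqVneq x 0) => [->|h]; [left|right].
have E : [set x : R | x != 0] = ~` [set 0] by apply/seteqP; split => x /=; move/eqP.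
apply/measurable_funU.
- exact: measurable_set1.
- by rewrite E; apply: measurableC; exact: measurable_set1.
split; first exact: measurable_fun_set1.
apply: measurable_realfun.open_continuous_measurable_fun.
- rewrite E; apply: closed_openC; apply: accessible_closed_set1.
  apply: hausdorff_accessible; exact: norm_hausdorff.
- move=> x; rewrite inE /= => hx; exact: inv_continuous.
Qed.
End Inv.

Section Aux.
Context {R : realType} {d : measure_display} {Om : measurableType d}.
Variable (P : probability Om R).

Lemma ae2 (P1 P2 Q : Om -> Prop) : {ae P, forall x, P1 x} -> {ae P, forall x, P2 x} ->
  (forall x, P1 x -> P2 x -> Q x) -> {ae P, forall x, Q x}.
Proof. move=> h1 h2 h; exact: (filterS2 _ h h1 h2). Qed.

Lemma ae3 (P1 P2 P3 Q : Om -> Prop) : {ae P, forall x, P1 x} -> {ae P, forall x, P2 x} ->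
  {ae P, forall x, P3 x} ->
  (forall x, P1 x -> P2 x -> P3 x -> Q x) -> {ae P, forall x, Q x}.
Proof. move=> h1 h2 h3 h; exact: (filterS3 _ h h1 h2 h3). Qed.

Lemma ae1 (P1 Q : Om -> Prop) : {ae P, forall x, P1 x} ->
  (forall x, P1 x -> Q x) -> {ae P, forall x, Q x}.
Proof. move=> h1 h; exact: (filterS h h1). Qed.

Lemma GmeasP (G : set (set Om)) (f : Om -> R) : sigma_algebra setT G ->
  Gmeas G f <-> measurable_fun setT (f : g_sigma_algebraType G -> R).
Proof.
move=> sG; split.
- move=> hf _ B mB; rewrite setTI.
  by rewrite [X in X _]measurable_g_measurableTypeE //; exact: hf.
- move=> hf B mB; have := hf measurableT B mB; rewrite setTI.
  by rewrite [X in X _ -> _]measurable_g_measurableTypeE.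
Qed.

Lemma Gmeas_comp (G : set (set Om)) (h : R -> R) (f : Om -> R) :
  measurable_fun setT h -> Gmeas G f -> Gmeas G (h \o f).
Proof.
move=> mh hf B mB; have := mh measurableT B mB; rewrite setTI => mB'.
by rewrite comp_preimage; exact: hf.
Qed.

Lemma Gmeas_cst (G : set (set Om)) (c : R) : sigma_algebra setT G -> Gmeas G (fun _ => c).
Proof. by move=> sG; apply/GmeasP => //; exact: measurable_cst. Qed.

Lemma GmeasD (G : set (set Om)) (f g : Om -> R) : sigma_algebra setT G -> Gmeas G f -> Gmeas G g ->
  Gmeas G (fun x => f x + g x).
Proof.
move=> sG /(GmeasP _ _ sG) hf /(GmeasP _ _ sG) hg; apply/GmeasP => //.
exact: measurable_realfun.measurable_funD.
Qed.

Lemma GmeasM (G : set (set Om)) (f g : Om -> R) : sigma_algebra setT G -> Gmeas G f -> Gmeas G g ->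
  Gmeas G (fun x => f x * g x).
Proof.
move=> sG /(GmeasP _ _ sG) hf /(GmeasP _ _ sG) hg; apply/GmeasP => //.
exact: measurable_realfun.measurable_funM.
Qed.

Lemma Gmeas_max (G : set (set Om)) (f g : Om -> R) : sigma_algebra setT G -> Gmeas G f -> Gmeas G g ->
  Gmeas G (fun x => Num.max (f x) (g x)).
Proof.
move=> sG /(GmeasP _ _ sG) hf /(GmeasP _ _ sG) hg; apply/GmeasP => //.
exact: measurable_realfun.measurable_maxr.
Qed.

Lemma GmeasN (G : set (set Om)) (f : Om -> R) : Gmeas G f -> Gmeas G (fun x => - f x).
Proof.
move=> hf; have mN : measurable_fun setT (fun x : R => - x).
  exact: measurable_realfun.oppr_measurable.
exact: (Gmeas_comp G (fun x => - x) f mN hf).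
Qed.


Lemma powR_sum_le (r a b c : R) : 0 <= r -> 0 <= a -> 0 <= b -> 0 <= c ->
  a <= b + c -> a `^ r <= 2 `^ r * (b `^ r + c `^ r).
Proof.
move=> r0 a0 b0 c0 abc.
wlog bc : b c b0 c0 abc / b <= c.
  move=> H; case: (leP b c) => h; first exact: H.
  by rewrite addrC; apply: H => //; [rewrite addrC|exact: ltW].
have nn (x : R) : 0 <= x -> x \is Num.nneg by move=> hx; rewrite nnegrE.
have h1 : a `^ r <= (b + c) `^ r.
  by apply: ge0_ler_powR => //; apply: nn => //; exact: addr_ge0.
have h2 : (b + c) `^ r <= (2 * c) `^ r.
  apply: ge0_ler_powR => //; try apply: nn => //; try exact: addr_ge0.
    by apply: mulr_ge0.
  by rewrite mulr2n mulrDl mul1r lerD2r.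
rewrite powRM // in h2.
apply: (le_trans h1); apply: (le_trans h2); apply: ler_wpM2l; first exact: powR_ge0.
by rewrite lerDr powR_ge0.
Qed.

Lemma Gmeas_mfun (G : set (set Om)) (f : Om -> R) : G `<=` measurable -> Gmeas G f ->
  measurable_fun setT f.
Proof. by move=> GM hf _ B mB; rewrite setTI; apply: GM; exact: hf. Qed.

Lemma inLp_bound (G : set (set Om)) (p : \bar R) (f g h : Om -> R) :
  (0 <= p)%E -> G `<=` measurable -> Gmeas G f -> inLp P p G g -> inLp P p G h ->
  {ae P, forall x, `|f x| <= `|g x| + `|h x|} -> inLp P p G f.
Proof.
move=> p0 GM mf [mg Hg] [mh Hh] hb; split => //.
case: p p0 Hg Hh => [r| |] //= p0 Hg Hh.
  case: (eqVneq r 0) => [->|rn0]; first by left.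
  right; case: Hg => [/eqP|Hg]; first by rewrite (negbTE rn0).
  case: Hh => [/eqP|Hh]; first by rewrite (negbTE rn0).
  have r0 : 0 <= r by rewrite -lee_fin.
  have mF (k : Om -> R) : Gmeas G k -> measurable_fun setT ((fun x => (`|k x| `^ r)%:E) : Om -> \bar R).
    move=> mk; apply/measurable_realfun.measurable_EFinP.
    apply: (measurableT_comp (measurable_realfun.measurable_powR r)).
    exact: (measurableT_comp (@normr_measurable R setT) (Gmeas_mfun _ _ GM mk)).
  apply: (le_lt_trans (ae_ge0_le_integral (f2 := fun x =>
     ((2 `^ r)%:E * ((`|g x| `^ r)%:E + (`|h x| `^ r)%:E))%E) measurableT _ (mF f mf) _ _ _)).
  - move=> x _; rewrite lee_fin; exact: powR_ge0.
  - move=> x _; rewrite -EFinD -EFinM lee_fin; apply: mulr_ge0; first exact: powR_ge0.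
    by apply: addr_ge0; exact: powR_ge0.
  - apply: emeasurable_funM; first exact: measurable_cst.
    by apply: emeasurable_funD; exact: mF.
  - apply: (ae1 _ _ hb) => x hx _; rewrite -EFinD -EFinM lee_fin.
    by apply: powR_sum_le.
  have cl1 : forall x, (0 <= (`|g x| `^ r)%:E + (`|h x| `^ r)%:E)%E.
    by move=> x; rewrite -EFinD lee_fin addr_ge0 ?powR_ge0.
  rewrite ge0_integralZl //; last first.
    by apply: emeasurable_funD; exact: mF.
  rewrite ge0_integralD //; try (by move=> x _; rewrite lee_fin powR_ge0); try exact: mF.
  apply: lte_mul_pinfty; first by rewrite lee_fin powR_ge0.
    by [].
  exact: lte_add_pinfty.
case: Hg => M1 hM1; case: Hh => M2 hM2; exists (M1 + M2).
apply: (ae3 _ _ _ _ hb hM1 hM2) => x h1 h2 h3.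
by apply: (le_trans h1); exact: lerD.
Qed.


Lemma max_addr (a b c : R) : Num.max a b + c = Num.max (a + c) (b + c).
Proof.
case: (leP a b) => h; first by rewrite !max_r // lerD2r.
by rewrite !max_l // ?lerD2r ltW.
Qed.

Lemma inLp_mono (G1 G2 : set (set Om)) (p : \bar R) (f : Om -> R) :
  G1 `<=` G2 -> inLp P p G1 f -> inLp P p G2 f.
Proof. by move=> sub [mf H]; split => // B mB; apply: sub; exact: mf. Qed.

Lemma inLp_cst (G : set (set Om)) (p : \bar R) (c : R) :
  sigma_algebra setT G -> (0 <= p)%E -> inLp P p G (fun _ => c).
Proof.
move=> sG p0; split; first exact: Gmeas_cst.
case: p p0 => [r| |] //= p0; last by exists `|c|; apply: aeW => x.
case: (eqVneq r 0) => [->|rn0]; first by left.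
right; rewrite integral_cst //= probability_setT mule1; exact: ltry.
Qed.

Lemma inLpN (G : set (set Om)) (p : \bar R) (f : Om -> R) :
  (0 <= p)%E -> G `<=` measurable -> inLp P p G f -> inLp P p G (fun x => - f x).
Proof.
move=> p0 GM hf; apply: (inLp_bound _ _ _ f f) => //; first exact: GmeasN hf.1.
by apply: aeW => x; rewrite normrN lerDl.
Qed.

Lemma inLpD (G : set (set Om)) (p : \bar R) (f g : Om -> R) : sigma_algebra setT G ->
  (0 <= p)%E -> G `<=` measurable -> inLp P p G f -> inLp P p G g ->
  inLp P p G (fun x => f x + g x).
Proof.
move=> sG p0 GM hf hg; apply: (inLp_bound _ _ _ f g) => //.
  exact: GmeasD hf.1 hg.1.
by apply: aeW => x; exact: ler_normD.
Qed.

Lemma inLp_max (G : set (set Om)) (p : \bar R) (f g : Om -> R) : sigma_algebra setT G ->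
  (0 <= p)%E -> G `<=` measurable -> inLp P p G f -> inLp P p G g ->
  inLp P p G (fun x => Num.max (f x) (g x)).
Proof.
move=> sG p0 GM hf hg; apply: (inLp_bound _ _ _ f g) => //.
  exact: Gmeas_max hf.1 hg.1.
apply: aeW => x /=; case: (leP (f x) (g x)) => h.
  by rewrite lerDr.
by rewrite lerDl.
Qed.

End Aux.

Section Main.
Context {R : realType} {d : measure_display} {Om : measurableType d}.
Variables (P : probability Om R) (T : nat) (F : nat -> set (set Om)) (p : \bar R)
  (Rm U : nat -> (Om -> R) -> (Om -> R)) (eta : nat -> Om -> R).
Hypothesis HF : is_filtration T F.
Hypothesis Hp : (0 <= p)%E.
Hypothesis HR : is_dyn_risk P p T F Rm.
Hypothesis HU : is_dyn_utility P p T F U.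
Hypothesis Heta : forall t, (t < T)%N -> inLp P 0%E (F t) (eta t) /\ {ae P, forall x, 0 < eta t x}.

Notation Lp := (inLp P p).

Lemma sigF t : (t <= T)%N -> sigma_algebra setT (F t).
Proof. by case: HF => h _ _ _; exact: h. Qed.

Lemma FM t : (t <= T)%N -> F t `<=` measurable.
Proof.
case: HF => _ hm _ hT tT A FA; apply/hT; exact: (hm t T tT (leqnn T)).
Qed.

Lemma Lp_mono s t f : (s <= t)%N -> (t <= T)%N -> Lp (F s) f -> Lp (F t) f.
Proof. case: HF => _ hm _ _ st tT; apply: inLp_mono; exact: hm. Qed.

Lemma Lp_cst t c : (t <= T)%N -> Lp (F t) (fun _ => c).
Proof. by move=> tT; apply: inLp_cst => //; exact: sigF. Qed.

Lemma LpN t f : (t <= T)%N -> Lp (F t) f -> Lp (F t) (fun x => - f x).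
Proof. by move=> tT; apply: inLpN => //; exact: FM. Qed.

Lemma LpD t f g : (t <= T)%N -> Lp (F t) f -> Lp (F t) g -> Lp (F t) (fun x => f x + g x).
Proof. by move=> tT; apply: inLpD => //; [exact: sigF | exact: FM]. Qed.

Lemma Lp_max t f g : (t <= T)%N -> Lp (F t) f -> Lp (F t) g ->
  Lp (F t) (fun x => Num.max (f x) (g x)).
Proof. by move=> tT; apply: inLp_max => //; [exact: sigF | exact: FM]. Qed.

Lemma Lp_bound t (f g h : Om -> R) : (t <= T)%N -> Gmeas (F t) f -> Lp (F t) g -> Lp (F t) h ->
  {ae P, forall x, `|f x| <= `|g x| + `|h x|} -> Lp (F t) f.
Proof. by move=> tT; apply: inLp_bound => //; exact: FM. Qed.

Lemma util_ae (Uf : nat -> (Om -> R) -> (Om -> R)) t Y Y' :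
  is_dyn_utility P p T F Uf -> (t < T)%N -> Lp (F t.+1) Y -> Lp (F t.+1) Y' ->
  {ae P, forall x, Y x = Y' x} -> {ae P, forall x, Uf t Y x = Uf t Y' x}.
Proof.
move=> HUf tT hY hY' e; case: (HUf t tT) => _ _ mon _.
have h1 : {ae P, forall x, Uf t Y x <= Uf t Y' x}.
  by apply: mon => //; apply: (ae1 P _ _ e) => x ->.
have h2 : {ae P, forall x, Uf t Y' x <= Uf t Y x}.
  by apply: mon => //; apply: (ae1 P _ _ e) => x ->.
apply: (ae2 P _ _ _ h1 h2) => x a b; by apply/le_anti; rewrite a b.
Qed.


Lemma kb (e : R) : 0 < e -> 0 <= (1 + e)^-1 /\ (1 + e)^-1 <= 1.
Proof.
move=> e0; have h : 0 < 1 + e by rewrite addr_gt0.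
split; first by rewrite invr_ge0 ltW.
by rewrite invf_le1 // lerDl ltW.
Qed.

Lemma Rm_in t Y : (t < T)%N -> Lp (F t.+1) Y -> Lp (F t) (Rm t (fun y => - Y y)).
Proof. move=> tT hY; case: (HR t tT) => h _ _ _; apply: h; exact: LpN. Qed.

Lemma Zin t Y : (t < T)%N -> Lp (F t.+1) Y ->
  Lp (F t.+1) (fun y => Num.max (Rm t (fun z => - Y z) y - Y y) 0).
Proof.
move=> tT hY.
have h0 : Lp (F t.+1) (Rm t (fun z => - Y z)) :=
  Lp_mono t t.+1 _ (leqnSn t) tT (Rm_in t Y tT hY).
have h1 : Lp (F t.+1) (fun y => Rm t (fun z => - Y z) y - Y y) :=
  LpD t.+1 (Rm t (fun z => - Y z)) (fun y => - Y y) tT h0 (LpN t.+1 Y tT hY).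
exact: (Lp_max t.+1 _ (fun _ => 0) tT h1 (Lp_cst t.+1 0 tT)).
Qed.

Lemma Gmeas_k t : (t < T)%N -> Gmeas (F t) (fun x => (1 + eta t x)^-1).
Proof.
move=> tT; have sG := sigF _ (ltnW tT).
apply: (Gmeas_comp _ _ (fun x => 1 + eta t x) (measurable_inv R)).
apply: GmeasD => //; first exact: Gmeas_cst.
exact: (Heta t tT).1.1.
Qed.

Lemma W_in t Y : (t < T)%N -> Lp (F t.+1) Y -> Lp (F t) (Wmap Rm U eta t Y).
Proof.
move=> tT hY; have sG := sigF _ (ltnW tT).
have hr := Rm_in _ _ tT hY.
have hu : Lp (F t) (U t (fun y => Num.max (Rm t (fun z => - Y z) y - Y y) 0)).
  by case: (HU t tT) => h _ _ _; apply: h; exact: Zin.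
apply: (Lp_bound _ _ _ _ (ltnW tT) _ hr hu).
  rewrite /Wmap; apply: GmeasD => //; first exact: hr.1.
  apply: GmeasN; apply: GmeasM => //; first exact: Gmeas_k.
  exact: hu.1.
apply: (ae1 P _ _ (Heta t tT).2) => x ex; rewrite /Wmap.
apply: le_trans (ler_normB _ _) _; rewrite lerD2l normrM.
have [k0 k1] := kb _ ex; rewrite (ger0_norm k0).
exact: ler_piMl.
Qed.


Lemma W_transl t (lam Y : Om -> R) : (t < T)%N -> Lp (F t) lam -> Lp (F t.+1) Y ->
  {ae P, forall x, Wmap Rm U eta t (Y \+ lam) x = Wmap Rm U eta t Y x + lam x}.
Proof.
move=> tT hl hY.
have hl1 : Lp (F t.+1) lam := Lp_mono _ _ _ (leqnSn t) tT hl.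
have hY' : Lp (F t.+1) (Y \+ lam) := LpD _ _ _ tT hY hl1.
case: (HR t tT) => _ Htr _ _.
have e : (fun y => - (Y \+ lam) y) = (fun y => - Y y) \+ (fun y => - lam y).
  by apply/funext => y /=; rewrite opprD.
have hr := Htr (fun y => - lam y) (fun y => - Y y) (LpN _ _ (ltnW tT) hl) (LpN _ _ tT hY).
have hZ : {ae P, forall y, Num.max (Rm t (fun z => - (Y \+ lam) z) y - (Y \+ lam) y) 0 =
                           Num.max (Rm t (fun z => - Y z) y - Y y) 0}.
  apply: (ae1 P _ _ hr) => y hy; rewrite e hy /=.
  congr (Num.max _ 0); ring.
have hU := util_ae U t _ _ HU tT (Zin _ _ tT hY') (Zin _ _ tT hY) hZ.
apply: (ae2 P _ _ _ hr hU) => x h1 h2; rewrite /Wmap h2 e h1; ring.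
Qed.


Lemma ineq (k r r' u u' : R) : 0 <= k -> k <= 1 -> r <= r' -> u' <= u ->
  r - k * (u + r) <= r' - k * (u' + r').
Proof. move=> *; nra. Qed.

Lemma W_mono t (Y Y' : Om -> R) : (t < T)%N -> Lp (F t.+1) Y -> Lp (F t.+1) Y' ->
  {ae P, forall x, Y x <= Y' x} ->
  {ae P, forall x, Wmap Rm U eta t Y x <= Wmap Rm U eta t Y' x}.
Proof.
move=> tT hY hY' hle.
case: (HR t tT) => _ _ HRm _.
case: (HU t tT) => _ HUt HUm _.
have hr := Rm_in _ _ tT hY; have hr' := Rm_in _ _ tT hY'.
have hr1 := Lp_mono _ _ _ (leqnSn t) tT hr; have hr1' := Lp_mono _ _ _ (leqnSn t) tT hr'.
have hrr : {ae P, forall x, Rm t (fun y => - Y y) x <= Rm t (fun y => - Y' y) x}.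
  apply: (HRm _ _ (LpN _ _ tT hY') (LpN _ _ tT hY)).
  by apply: (ae1 P _ _ hle) => x hx; rewrite lerN2.
pose M (Y : Om -> R) := fun y => Num.max (- Y y) (- Rm t (fun z => - Y z) y).
have eZ (Y0 : Om -> R) : (fun y => Num.max (Rm t (fun z => - Y0 z) y - Y0 y) 0) =
   M Y0 \+ Rm t (fun z => - Y0 z).
  by apply/funext => y; rewrite /M /= max_addr addNr [- Y0 y + _]addrC.
have hM (Y0 : Om -> R) (h0 : Lp (F t.+1) Y0) : Lp (F t.+1) (M Y0) :=
  Lp_max t.+1 (fun y => - Y0 y) (fun y => - Rm t (fun z => - Y0 z) y) tT
    (LpN t.+1 Y0 tT h0)
    (LpN t.+1 _ tT (Lp_mono t t.+1 _ (leqnSn t) tT (Rm_in t Y0 tT h0))).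
have hUZ (Y0 : Om -> R) : Lp (F t.+1) Y0 ->
  {ae P, forall x, U t (fun y => Num.max (Rm t (fun z => - Y0 z) y - Y0 y) 0) x =
     U t (M Y0) x + Rm t (fun z => - Y0 z) x}.
  by move=> h0; rewrite eZ; exact: (HUt _ _ (Rm_in t Y0 tT h0) (hM Y0 h0)).
have hMM : {ae P, forall x, U t (M Y') x <= U t (M Y) x}.
  apply: (HUm _ _ (hM _ hY') (hM _ hY)).
  apply: (ae2 P _ _ _ hle hrr) => x h1 h2; rewrite /M ge_max !le_max.
  by rewrite !lerN2 h1 h2 orbT.
have A := ae2 P _ _ _ (hUZ _ hY) (hUZ _ hY') (fun x a b => conj a b).
have B := ae2 P _ _ _ hMM hrr (fun x a b => conj a b).
apply: (ae3 P _ _ _ _ A B (Heta t tT).2) => x [a b] [c e] f.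
rewrite /Wmap a b; have [k0 k1] := kb _ f; exact: ineq.
Qed.


Lemma W_hom t (c Y : Om -> R) : (t < T)%N -> Lp (F t) c -> {ae P, forall x, 0 <= c x} ->
  Lp (F t.+1) Y -> Lp (F t.+1) (c \* Y) ->
  {ae P, forall x, Wmap Rm U eta t (c \* Y) x = c x * Wmap Rm U eta t Y x}.
Proof.
move=> tT hc hc0 hY hcY.
case: (HR t tT) => _ _ _ HRh; case: (HU t tT) => _ _ _ HUh.
have e : (fun y => - (c \* Y) y) = c \* (fun y => - Y y).
  by apply/funext => y /=; rewrite mulrN.
have hcnY : Lp (F t.+1) (c \* (fun y => - Y y)).
  by rewrite -e; exact: (LpN _ _ tT hcY).
have hr := HRh c (fun y => - Y y) hc hc0 (LpN _ _ tT hY) hcnY.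
pose Z := fun y => Num.max (Rm t (fun z => - Y z) y - Y y) 0.
pose Zc := fun y => Num.max (Rm t (fun z => - (c \* Y) z) y - (c \* Y) y) 0.
have hZ : Lp (F t.+1) Z := Zin t Y tT hY.
have hZc : Lp (F t.+1) Zc := Zin t (c \* Y) tT hcY.
have c1 : Lp (F t.+1) c := Lp_mono t t.+1 c (leqnSn t) tT hc.
have eqZ : {ae P, forall y, Zc y = (c \* Z) y}.
  apply: (ae2 P _ _ _ hr hc0) => y hy cy.
  rewrite /Zc /Z e hy /= maxr_pMr // mulr0 mulrBr //.
have hcZ : Lp (F t.+1) (c \* Z).
  apply: (Lp_bound t.+1 (c \* Z) Zc Zc tT (GmeasM _ c Z (sigF _ tT) c1.1 hZ.1) hZc hZc).
  by apply: (ae1 P _ _ eqZ) => y <-; rewrite lerDl normr_ge0.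
have hU1 := util_ae U t Zc (c \* Z) HU tT hZc hcZ eqZ.
have hU2 := HUh c Z hc hc0 hZ hcZ.
apply: (ae3 P _ _ _ _ hr hU1 hU2) => x h1 h2 h3.
rewrite /Wmap; rewrite -/Zc h2 h3 e h1; ring.
Qed.


Lemma W_util : is_dyn_utility P p T F (Wmap Rm U eta).
Proof.
move=> t tT; split.
- by move=> Y hY; exact: W_in.
- by move=> lam Y hl hY; exact: W_transl.
- by move=> Y Y' hY hY' hle; exact: W_mono.
- by move=> c Y hc hc0 hY hcY; exact: W_hom.
Qed.

Lemma chain_in n : forall s Z, (s + n <= T)%N -> Lp (F (s + n)) Z ->
  Lp (F s) (Wchain Rm U eta n s Z).
Proof.
elim: n => [|n IH] s Z snT hZ /=; first by rewrite addn0 in hZ.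
have sT : (s < T)%N by apply: leq_trans snT; rewrite addnS ltnS leq_addr.
apply: (W_in s _ sT); apply: IH; rewrite addSnnS //.
Qed.

Lemma chain_transl n : forall s Z lam, (s + n <= T)%N -> Lp (F (s + n)) Z -> Lp (F s) lam ->
  {ae P, forall x, Wchain Rm U eta n s (Z \+ lam) x = Wchain Rm U eta n s Z x + lam x}.
Proof.
elim: n => [|n IH] s Z lam snT hZ hl /=; first exact: aeW.
have sT : (s < T)%N by apply: leq_trans snT; rewrite addnS ltnS leq_addr.
have hl1 : Lp (F s.+1) lam := Lp_mono s s.+1 lam (leqnSn s) sT hl.
rewrite -addSnnS in snT hZ.
have hln : Lp (F (s.+1 + n)) lam := Lp_mono s.+1 _ lam (leq_addr _ _) snT hl1.
have h1 := IH s.+1 Z lam snT hZ hl1.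
have hA : Lp (F s.+1) (Wchain Rm U eta n s.+1 (Z \+ lam)).
  exact: (chain_in n s.+1 _ snT (LpD _ Z lam snT hZ hln)).
have hB : Lp (F s.+1) (Wchain Rm U eta n s.+1 Z) := chain_in n s.+1 Z snT hZ.
have hBl : Lp (F s.+1) (Wchain Rm U eta n s.+1 Z \+ lam) := LpD _ _ lam sT hB hl1.
have h2 := util_ae (Wmap Rm U eta) s _ _ W_util sT hA hBl h1.
have h3 := W_transl s lam _ sT hl hB.
apply: (ae2 P _ _ _ h2 h3) => x -> ->; by [].
Qed.


Variable X : nat -> Om -> R.
Hypothesis HX : forall t, (1 <= t <= T)%N -> Lp (F t) (X t).

Lemma Vstep t : (t < T)%N ->
  V Rm U eta T X t = Wmap Rm U eta t (fun x => X t.+1 x + V Rm U eta T X t.+1 x).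
Proof.
move=> tT; rewrite /V -(subnSK tT) /=.
have -> : (T - (T - t.+1).+1 = t)%N by rewrite (subnSK tT) subKn // ltnW.
by [].
Qed.

Lemma V_in k : forall t, (t + k = T)%N -> Lp (F t) (V Rm U eta T X t).
Proof.
elim: k => [|k IH] t tk.
  rewrite addn0 in tk; subst t; rewrite /V subnn; exact: Lp_cst.
have tT : (t < T)%N by rewrite -tk addnS ltnS leq_addr.
rewrite Vstep //; apply: (W_in t _ tT).
apply: (LpD t.+1 (X t.+1) _ tT); first by apply: HX; rewrite ltn0Sn.
by apply: IH; rewrite addSnnS.
Qed.

Definition Ssum t := fun y => \sum_(t.+1 <= s < T.+1) X s y.

Lemma Ssum_step t : (t < T)%N -> Ssum t = Ssum t.+1 \+ X t.+1.
Proof.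
by move=> tT; apply/funext => y; rewrite /Ssum /= big_ltn ?ltnS // addrC.
Qed.

Lemma Ssum_in k : forall t, (t + k = T)%N -> Lp (F T) (Ssum t).
Proof.
elim: k => [|k IH] t tk.
  rewrite addn0 in tk; subst t.
  have -> : Ssum T = fun _ => 0 by apply/funext => y; rewrite /Ssum big_geq.
  exact: Lp_cst.
have tT : (t < T)%N by rewrite -tk addnS ltnS leq_addr.
rewrite Ssum_step //; apply: (LpD T _ (X t.+1) (leqnn T)).
  by apply: IH; rewrite addSnnS.
apply: (Lp_mono t.+1 T _ tT (leqnn T)); by apply: HX; rewrite ltn0Sn.
Qed.

Lemma main_ii k : forall t, (t + k = T)%N ->
  {ae P, forall x, V Rm U eta T X t x = Wchain Rm U eta (T - t) t (Ssum t) x}.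
Proof.
elim: k => [|k IH] t tk.
  rewrite addn0 in tk; subst t; rewrite subnn /=; apply: aeW => x.
  by rewrite /V subnn /= /Ssum big_geq.
have tT : (t < T)%N by rewrite -tk addnS ltnS leq_addr.
have tk' : (t.+1 + k = T)%N by rewrite addSnnS.
have kE : (k = T - t.+1)%N by rewrite -tk' addKn.
rewrite Vstep // -(subnSK tT) /= Ssum_step //.
have tn : (t.+1 + (T - t.+1) = T)%N by rewrite subnKC.
have hS : Lp (F (t.+1 + (T - t.+1))) (Ssum t.+1) by rewrite tn; apply: (Ssum_in k); rewrite addSnnS.
have hXt : Lp (F t.+1) (X t.+1) by apply: HX; rewrite ltn0Sn tT.
have h1 := chain_transl (T - t.+1) t.+1 (Ssum t.+1) (X t.+1) (eq_leq tn) hS hXt.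
have h2 := IH t.+1 tk'.
have hV : Lp (F t.+1) (V Rm U eta T X t.+1) := V_in k t.+1 tk'.
have hA : Lp (F t.+1) (fun x => X t.+1 x + V Rm U eta T X t.+1 x) := LpD _ _ _ tT hXt hV.
have hB : Lp (F t.+1) (Wchain Rm U eta (T - t.+1) t.+1 (Ssum t.+1 \+ X t.+1)).
  apply: (chain_in _ t.+1 _ (eq_leq tn)); rewrite tn.
  apply: (LpD T _ (X t.+1) (leqnn T)); first by apply: (Ssum_in k); rewrite addSnnS.
  exact: (Lp_mono t.+1 T _ tT (leqnn T) hXt).
apply: (util_ae (Wmap Rm U eta) t _ _ W_util tT hA hB).
apply: (ae2 P _ _ _ h1 h2) => x a b /=; by rewrite a b -kE addrC.
Qed.

End Main.

Theorem proposition1 (R : realType) (d : measure_display) (Om : measurableType d)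
  (P : probability Om R) (T : nat) (F : nat -> set (set Om)) (p : \bar R)
  (Rm U : nat -> (Om -> R) -> (Om -> R)) (eta : nat -> Om -> R) :
  (1 <= T)%N ->
  is_filtration T F ->
  (0 <= p)%E ->
  is_dyn_risk P p T F Rm ->
  is_dyn_utility P p T F U ->
  (forall t, (t < T)%N -> inLp P 0%E (F t) (eta t) /\ {ae P, forall x, 0 < eta t x}) ->
  is_dyn_utility P p T F (Wmap Rm U eta) /\
  (forall X : nat -> Om -> R,
     (forall t, (1 <= t <= T)%N -> inLp P p (F t) (X t)) ->
     forall t, (t < T)%N ->
       {ae P, forall x, V Rm U eta T X t x =
          Wchain Rm U eta (T - t) t (fun y => \sum_(t.+1 <= s < T.+1) X s y) x}).
Proof.
move=> T1 HF Hp HR HU Heta; split.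
  exact: (W_util P T F p Rm U eta HF Hp HR HU Heta).
move=> X HX t tT.
exact: (main_ii P T F p Rm U eta HF Hp HR HU Heta X HX (T - t) t (subnKC (ltnW tT))).
Qed.
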